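(* Let $X_1,\dots,X_r$ be independent random vectors in $\mathbb{R}^n$, and let $X$ be their coordinate-wise median (i.e. $X_j=\operatorname{median}_{i\in[r]}(X_i)_j$ for each coordinate $j$). Let $C>0$ and $p\ge 0$. If $\Pr[\|X_i\|_2<C]\ge 1-p$ for each $i$, then \[ \Pr[\|X\|_2<C\sqrt{3}]\ge 1-(11p)^{r/4}. \]
   Context: For even $r$ the median is the average of the two middle values. *)

(* Defs.v *)
From HB Require Import structures.
From mathcomp Require Import all_boot all_order all_algebra.
From mathcomp Require Import all_classical all_reals all_analysis.
Set Implicit Arguments. Unset Strict Implicit. Unset Printing Implicit Defensive.
Import Order.TTheory GRing.Theory Num.Theory.
Local Open Scope classical_set_scope.
Local Open Scope ring_scope.

(* Median of r real values: sort them; for odd r the middle value,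
   for even r the average of the two middle values (r = 0 gives 0). *)
Definition median (R : realType) (r : nat) (x : 'I_r -> R) : R :=
  let s := sort <=%R [seq x i | i <- enum 'I_r] in
  if odd r then nth 0 s r./2
  else (nth 0 s r./2.-1 + nth 0 s r./2) / 2.

Definition norm2 (R : realType) (n : nat) (v : 'rV[R]_n) : R :=
  Num.sqrt (\sum_(j < n) v 0 j ^+ 2).

Definition coord_median (R : realType) (n r : nat) (v : 'I_r -> 'rV[R]_n)
  : 'rV[R]_n := \row_(j < n) median (fun i => v i 0 j).

Definition random_vector d (T : measurableType d) (R : realType) (n : nat)
  (Y : T -> 'rV[R]_n) : Prop :=
  forall j : 'I_n, measurable_fun setT (fun t => Y t 0 j).

(* sigma-algebra on T generated by a random vector Y (= preimages of Borel
   sets of R^n, the Borel sigma-algebra of R^n being generated by the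
   coordinate projections) *)
Definition gen_sigma d (T : measurableType d) (R : realType) (n : nat)
  (Y : T -> 'rV[R]_n) : set (set T) :=
  <<s [set E | exists (j : 'I_n) (A : set R),
               measurable A /\ E = (fun t => Y t 0 j) @^-1` A] >>.

Definition mutually_independent d (T : measurableType d) (R : realType)
  (P : probability T R) (n r : nat) (X : 'I_r -> T -> 'rV[R]_n) : Prop :=
  forall E : 'I_r -> set T, (forall i, gen_sigma (X i) (E i)) ->
    P (\bigcap_(i in [set: 'I_r]) E i) = (\prod_(i < r) P (E i))%E.

(* Main.v *)
Require Import Defs.
From HB Require Import structures.
From mathcomp Require Import all_boot all_order all_algebra.
From mathcomp Require Import all_classical all_reals all_analysis.
From mathcomp Require Import zify ring lra.
Import Order.TTheory GRing.Theory Num.Theory.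
Local Open Scope classical_set_scope.
Local Open Scope ring_scope.

Set Implicit Arguments. Unset Strict Implicit. Unset Printing Implicit Defensive.


Section OrdStat.
Variable R : realType.

Lemma nth_sorted_count (P : pred R) (s : seq R) (k : nat) :
  sorted <=%R s -> (forall x y : R, x <= y -> P y -> P x) -> (k < size s)%N ->
  P (nth 0 s k) = (k < count P s)%N.
Proof.
move=> + Pdc; elim: s k => [//|x s IH] k /= srt ks.
have srt' : sorted <=%R s by apply: path_sorted srt.
have allx : all (fun y => x <= y) s by apply: (order_path_min le_trans srt).
have cnt0 : ~~ P x -> count P s = 0%N.
  move=> nPx; apply/eqP; rewrite -leqn0 leqNgt -has_count; apply/hasPn => y ys.
  by apply: contra nPx; apply: Pdc; apply: (allP allx).
case: k ks => [|k] ks /=.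
  by case: (boolP (P x)) => Px //=; rewrite cnt0.
case: (boolP (P x)) => Px /=.
  by rewrite add1n ltnS IH.
rewrite cnt0 // ltn0; apply/negbTE; apply: contra Px => Pn.
apply: Pdc Pn; apply: (allP allx); apply: mem_nth; by [].
Qed.

Definition kth (r : nat) (x : 'I_r -> R) (k : nat) : R :=
  nth 0 (sort <=%R [seq x i | i <- enum 'I_r]) k.

Lemma median_kth (r : nat) (x : 'I_r -> R) :
  median x = if odd r then kth x r./2 else (kth x r./2.-1 + kth x r./2) / 2.
Proof. by []. Qed.

Lemma kth_count (r : nat) (x : 'I_r -> R) (P : pred R) k :
  (forall a b : R, a <= b -> P b -> P a) -> (k < r)%N ->
  P (kth x k) = (k < count (fun i => P (x i)) (enum 'I_r))%N.
Proof.
move=> Pdc kr; rewrite /kth nth_sorted_count //.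
- by rewrite count_sort count_map.
- exact: (sort_sorted (@le_total _ R)).
- by rewrite size_sort size_map size_enum_ord.
Qed.

Lemma kth_mono (r : nat) (x : 'I_r -> R) k l :
  (k <= l)%N -> (l < r)%N -> kth x k <= kth x l.
Proof.
move=> kl lr; rewrite /kth.
apply: (sorted_leq_nth le_trans lexx) => //.
- exact: (sort_sorted (@le_total _ R)).
- by rewrite inE size_sort size_map size_enum_ord (leq_ltn_trans kl).
- by rewrite inE size_sort size_map size_enum_ord.
Qed.

Lemma count_card (r : nat) (a : pred 'I_r) :
  count a (enum 'I_r) = #|[set i | a i]%SET|.
Proof. rewrite (@eq_card _ _ a); last by move=> i; rewrite inE.
by rewrite cardE /enum_mem size_filter (@eq_filter _ _ predT) // filter_predT. Qed.

Lemma median_count (r : nat) (x : 'I_r -> R) : (0 < r)%N ->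
  (r <= 2 * #|[set i | (median x ^+ 2 <= x i ^+ 2)%R]%SET|)%N.
Proof.
move=> r0; set m := median x.
have hr := odd_double_half r.
have h2r : (r./2 < r)%N.
  by move: hr; case: (odd r) => /=; rewrite -addnn; lia.
case: (leP 0 m) => m0.
-
  have mu : m <= kth x r./2.
    rewrite /m median_kth; case: (odd r); first by [].
    have := kth_mono x (leq_pred r./2) h2r; lra.
  have := kth_count x (P := fun y => y < m) (k := r./2).
  move=> /(_ _ h2r); rewrite ltNge mu /= => /(_ _)/esym.
  move=> /(_ (fun a b ab bm => le_lt_trans ab bm)) h.
  have := count_predC (fun i => (x i < m)%R) (enum 'I_r).
  rewrite size_enum_ord => hc.
  have : (count (predC (fun i => (x i < m)%R)) (enum 'I_r) <=
          count (fun i => (m ^+ 2 <= x i ^+ 2)%R) (enum 'I_r))%N.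
    apply: sub_count => i /=; rewrite -leNgt => mx.
    by rewrite ler_sqr ?nnegrE // (le_trans m0 mx).
  move: h; rewrite ltnNge => /negbFE h.
  have : (r <= r./2 + count (predC (fun i => (x i < m)%R)) (enum 'I_r))%N.
    by rewrite -{1}hc leq_add2r.
  rewrite -count_card; move: hr; rewrite -addnn; case: (odd r) => /=; lia.
- set k0 := if odd r then r./2 else r./2.-1.
  have k0r : (k0 < r)%N by rewrite /k0; case: (odd r) => //; apply: leq_ltn_trans h2r; exact: leq_pred.
  have lm : kth x k0 <= m.
    rewrite /m median_kth /k0; case: (odd r); first by [].
    have := kth_mono x (leq_pred r./2) h2r; lra.
  have := kth_count x (P := fun y => y <= m) (k := k0).
  move=> /(_ (fun a b ab bm => le_trans ab bm) k0r); rewrite lm => /esym h.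
  have : (count (fun i => (x i <= m)%R) (enum 'I_r) <=
          count (fun i => (m ^+ 2 <= x i ^+ 2)%R) (enum 'I_r))%N.
    apply: sub_count => i /= xm.
    rewrite -sqrrN -(sqrrN (x i)) ler_sqr ?nnegrE; [lra|lra|lra].
  rewrite -count_card => h'.
  have : (r <= 2 * k0.+1)%N.
    rewrite /k0 -{1}hr; case: (odd r) hr => /= hr'.
      lia.
    have : (0 < r./2)%N by rewrite lt0n; apply: contraTneq r0 => e; rewrite -hr' e.
    lia.
  move=> hk; apply: (leq_trans hk); rewrite leq_mul2l /=; exact: (leq_trans h h').
Qed.

End OrdStat.


Lemma det_bound (R : realType) (r n : nat) (x : 'I_r -> 'I_n -> R) (C : R) :
  (0 < r)%N -> 0 < C ->
  (4 * #|[set i | ~~ (\sum_(j < n) x i j ^+ 2 < C ^+ 2)%R]%SET| <= r)%N ->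
  \sum_(j < n) (median (fun i => x i j)) ^+ 2 < 3 * C ^+ 2.
Proof.
move=> r0 C0 hb.
set G := [set i | (\sum_(j < n) x i j ^+ 2 < C ^+ 2)%R]%SET.
set b := #|[set i | ~~ (\sum_(j < n) x i j ^+ 2 < C ^+ 2)%R]%SET| in hb.
have hGC : ~: G = [set i | ~~ (\sum_(j < n) x i j ^+ 2 < C ^+ 2)%R]%SET.
  by apply/setP => i; rewrite !inE.
have hgb : (#|G| + b)%N = r by rewrite /b -hGC cardsC card_ord.
have hj : forall j, (r%:R / 2 - b%:R) * (median (fun i => x i j)) ^+ 2 <=
    \sum_(i in G) x i j ^+ 2.
  move=> j; set m := median (fun i => x i j).
  set A := [set i | (m ^+ 2 <= x i j ^+ 2)%R]%SET.
  have hA : (r <= 2 * #|A|)%N by apply: median_count.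
  have hAD : (#|A :\: G| <= b)%N.
    rewrite /b -hGC; apply: subset_leq_card; rewrite finset.setDE; exact: subsetIr.
  have hAc := cardsID G A.
  have hr : r%:R <= 2 * (#|A :&: G|%:R + b%:R :> R).
    by rewrite -natrD -natrM ler_nat; lia.
  have e1 : \sum_(i in G) (if i \in A then m ^+ 2 else 0) = #|A :&: G|%:R * m ^+ 2.
    rewrite -big_mkcondr /= sumr_const mulr_natl; congr (_ *+ _).
    by apply: eq_card => i; rewrite [LHS]/in_mem /= !inE andbC.
  apply: (@le_trans _ _ (#|A :&: G|%:R * m ^+ 2)).
    apply: ler_wpM2r; first exact: sqr_ge0.
    lra.
  rewrite -e1; apply: ler_sum => i _.
  case: ifP => iA; last exact: sqr_ge0.
  by move: iA; rewrite inE.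
have G0 : (0 < #|G|)%N by lia.
have [i0 i0G] := card_gt0P G0.
have hsum : (r%:R / 2 - b%:R) * \sum_(j < n) (median (fun i => x i j)) ^+ 2 <
    #|G|%:R * C ^+ 2.
  rewrite mulr_sumr.
  apply: (le_lt_trans (ler_sum _ (fun j _ => hj j))).
  rewrite exchange_big /= mulr_natl -sumr_const.
  apply: ltr_sum.
    by apply/hasP; exists i0; [rewrite mem_index_enum|].
  by move=> i; rewrite inE.
have rb : (4 * b)%:R <= r%:R :> R by rewrite ler_nat.
have gb : (#|G|%:R + b%:R) = r%:R :> R by rewrite -natrD hgb.
have r1 : 1 <= r%:R :> R by rewrite ler1n.
rewrite natrM in rb.
have pos : 0 < r%:R / 2 - b%:R :> R by lra.
have key : #|G|%:R * C ^+ 2 <= (r%:R / 2 - b%:R) * (3 * C ^+ 2) :> R.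
  rewrite [X in _ <= X]mulrA; apply: ler_wpM2r; first exact: sqr_ge0.
  lra.
by rewrite -(ltr_pM2l pos); apply: (lt_le_trans hsum key).
Qed.


Section Meas.
Context d (T : measurableType d) (R : realType).

Lemma count_natr (I : Type) (p : pred I) (s : seq I) :
  (count p s)%:R = \sum_(i <- s) (if p i then 1 else 0) :> R.
Proof.
elim: s => [|y s IH]; first by rewrite big_nil.
by rewrite big_cons /= natrD IH; case: (p y).
Qed.

Lemma kth_measurable (r : nat) (f : 'I_r -> T -> R) (k : nat) :
  (forall i, measurable_fun setT (f i)) -> (k < r)%N ->
  measurable_fun setT (fun t => kth (fun i => f i t) k).
Proof.
move=> mf kr.
apply: (measurability _ (measurable_realfun.RGenInftyO.measurableE R)) => //.
move=> _ [_ [a ->] <-].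
set S := fun t => \sum_(i <- enum 'I_r) (if f i t < a then 1 else 0) : R.
have mS : measurable_fun setT S.
  apply: measurable_sum => i; apply: measurable_fun_ifT => //.
  by apply: measurable_realfun.measurable_fun_ltr => //; exact: measurable_cst.
have -> : setT `&` (fun t => kth (fun i => f i t) k) @^-1` `]-oo, a[ =
          setT `&` S @^-1` `]k%:R, +oo[.
  apply/seteqP; split => t [_ ht]; split => //; move: ht;
    rewrite /preimage /= !in_itv /= ?andbT;
    rewrite (@kth_count _ _ _ (fun y => y < a)) //;
    try (by move=> ? ? ab ba; apply: le_lt_trans ab ba);
    by rewrite /S -count_natr ltr_nat.
exact: mS.
Qed.

Lemma median_measurable (r : nat) (f : 'I_r -> T -> R) :
  (forall i, measurable_fun setT (f i)) -> (0 < r)%N ->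
  measurable_fun setT (fun t => median (fun i => f i t)).
Proof.
move=> mf r0.
have hr := odd_double_half r.
have h2r : (r./2 < r)%N.
  by move: hr; case: (odd r) => /=; rewrite -addnn; lia.
rewrite /median /=; case: (odd r).
  exact: kth_measurable.
apply: measurable_realfun.measurable_funM; last exact: measurable_cst.
apply: measurable_realfun.measurable_funD; apply: kth_measurable => //.
exact: leq_ltn_trans (leq_pred _) h2r.
Qed.

Lemma sqrt_lt_equiv (M C : R) : 0 < C -> (Num.sqrt M < C * Num.sqrt 3) = (M < 3 * C ^+ 2).
Proof.
move=> C0.
have -> : C * Num.sqrt 3 = Num.sqrt (3 * C ^+ 2).
  by rewrite sqrtrM // sqrtr_sqr gtr0_norm // mulrC.
by rewrite ltr_sqrt // mulr_gt0 // exprn_gt0.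
Qed.

Lemma sqrt_lt_equiv1 (M C : R) : 0 < C -> (Num.sqrt M < C) = (M < C ^+ 2).
Proof.
move=> C0.
by rewrite -{1}(gtr0_norm C0) -sqrtr_sqr ltr_sqrt // exprn_gt0.
Qed.

Lemma gen_sigma_ball (n : nat) (Y : T -> 'rV[R]_n) (c : R) :
  gen_sigma Y [set t | \sum_(j < n) Y t 0 j ^+ 2 < c].
Proof.
set G := [set E | exists (j : 'I_n) (A : set R),
               measurable A /\ E = (fun t => Y t 0 j) @^-1` A].
have mj : forall j, measurable_fun (setT : set (g_sigma_algebraType G)) (fun t => Y t 0 j).
  move=> j0 _ A mA; rewrite setTI; apply: sub_sigma_algebra; by exists j0, A.
have mS : measurable_fun (setT : set (g_sigma_algebraType G))
   (fun t => \sum_(j < n) Y t 0 j ^+ 2).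
  by apply: measurable_sum => j; exact: measurable_realfun.measurable_funX.
have := mS measurableT _ (measurable_itv `]-oo, c[).
rewrite setTI.
have -> : (fun t => \sum_(j < n) Y t 0 j ^+ 2) @^-1` `]-oo, c[ =
     [set t | \sum_(j < n) Y t 0 j ^+ 2 < c].
  by apply/seteqP; split => t; rewrite /preimage /= in_itv.
by [].
Qed.

Lemma gen_sigmaC (n : nat) (Y : T -> 'rV[R]_n) (E : set T) :
  gen_sigma Y E -> gen_sigma Y (~` E).
Proof.
set G := [set E | exists (j : 'I_n) (A : set R),
               measurable A /\ E = (fun t => Y t 0 j) @^-1` A].
exact: (@measurableC _ (g_sigma_algebraType G)).
Qed.

Lemma gen_sigmaT (n : nat) (Y : T -> 'rV[R]_n) : gen_sigma Y setT.
Proof.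
set G := [set E | exists (j : 'I_n) (A : set R),
               measurable A /\ E = (fun t => Y t 0 j) @^-1` A].
exact: (@measurableT _ (g_sigma_algebraType G)).
Qed.

Lemma gen_sigma_meas (n : nat) (Y : T -> 'rV[R]_n) (E : set T) :
  random_vector Y -> gen_sigma Y E -> measurable E.
Proof.
move=> rY; apply: smallest_sub; first exact: sigma_algebra_measurable.
move=> _ [j [A [mA ->]]].
by rewrite -[X in measurable X]setTI; apply: rY.
Qed.

End Meas.


Lemma bin4_step k : ('C((k.+1) * 4, k.+1) <= 11 * 'C(k * 4, k))%N.
Proof.
have e1 := mul_bin_diag (k * 4).+4 k.
have e2 := mul_bin_down (k * 4).+3 k.
have e3 := mul_bin_down (k * 4).+2 k.
have e4 := mul_bin_down (k * 4).+1 k.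
rewrite /= in e1 e2 e3 e4.
have -> : ((k.+1) * 4 = (k * 4).+4)%N by lia.
set c' := 'C((k * 4).+4, k.+1) in e1 *.
set a3 := 'C((k * 4).+3, k) in e1 e2.
set a2 := 'C((k * 4).+2, k) in e2 e3.
set a1 := 'C((k * 4).+1, k) in e3 e4.
set c := 'C(k * 4, k) in e4 *.
have h1 : c' = (4 * a3)%N by nia.
have h2 : (3 * a3 <= 4 * a2)%N by nia.
have h3 : (3 * a2 <= 4 * a1)%N by nia.
have h4 : (3 * a1 <= 4 * c)%N by nia.
lia.
Qed.

Lemma bin4_le k : ('C(k * 4, k) <= 11 ^ k)%N.
Proof.
elim: k => [|k IH]; first by [].
apply: leq_trans (bin4_step k) _.
by rewrite expnS leq_mul2l IH orbT.
Qed.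

Lemma bin_r_le r : ('C(r, (r %/ 4).+1) <= 11 ^ (r %/ 4).+1)%N.
Proof.
apply: leq_trans (bin4_le _); apply: leq_bin2l.
have := divn_eq r 4; have := ltn_pmod r (isT : (0 < 4)%N); lia.
Qed.

Lemma subset_card_ex (T : finType) (A : {set T}) k :
  (k <= #|A|)%N -> exists S : {set T}, S \subset A /\ #|S| = k.
Proof.
elim: k => [|k IH] hk; first by exists finset.set0; rewrite finset.sub0set cards0.
have [S [SA cS]] := IH (ltnW hk).
have : (0 < #|A :\: S|)%N.
  by rewrite cardsD (finset.setIidPr SA) cS subn_gt0.
move=> /card_gt0P [x]; rewrite inE => /andP [xS xA].
exists (x |: S); split.
  by rewrite finset.subUset finset.sub1set xA SA.
by rewrite cardsU1 xS cS.
Qed.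


Lemma in_bigsetU (U : Type) (I : eqType) (s : seq I) (Q : pred I) (F : I -> set U) x t :
  x \in s -> Q x -> F x t -> (\big[setU/set0]_(i <- s | Q i) F i) t.
Proof.
elim: s => [//|y s IH]; rewrite in_cons big_cons => /orP [/eqP <-|xs] Qx Fx.
  by rewrite Qx; left.
case: (Q y); last exact: IH.
by right; apply: IH.
Qed.

Lemma in_bigsetI (U : Type) (I : Type) (s : seq I) (Q : pred I) (F : I -> set U) t :
  (forall i, Q i -> F i t) -> (\big[setI/setT]_(i <- s | Q i) F i) t.
Proof.
elim: s => [|y s IH] h; first by rewrite big_nil.
rewrite big_cons; case: ifP => Qy; last exact: IH.
by split; [apply: h|apply: IH].
Qed.

Lemma bigsetI_in (U : Type) (I : eqType) (s : seq I) (Q : pred I) (F : I -> set U) t :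
  (\big[setI/setT]_(i <- s | Q i) F i) t -> (forall i, i \in s -> Q i -> F i t).
Proof.
elim: s => [|y s IH] //=; rewrite big_cons => h i; rewrite in_cons => /orP [/eqP ->|ins] Qi.
- by move: h; rewrite Qi => -[].
- by apply: IH => //; move: h; case: (Q y) => // -[].
Qed.

Section Union.
Context d (T : measurableType d) (R : realType) (P : probability T R).

Lemma union_bound (I : Type) (s : seq I) (Q : pred I) (F : I -> set T) :
  (forall i, measurable (F i)) ->
  (P (\big[setU/set0]_(i <- s | Q i) F i) <= \sum_(i <- s | Q i) P (F i))%E.
Proof.
move=> mF; elim: s => [|y s IH]; first by rewrite !big_nil measure0.
rewrite !big_cons; case: (Q y) => //.
apply: le_trans (leeD (lexx _) IH).
apply: measureU2 => //; exact: bigsetU_measurable.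
Qed.

Lemma Pfin (A : set T) : measurable A -> P A = (fine (P A))%:E.
Proof.
move=> mA; rewrite fineK // ge0_fin_numE ?measure_ge0 //.
exact: le_lt_trans (probability_le1 P mA) (ltry _).
Qed.

Lemma Pfin_ge0 (A : set T) : 0 <= fine (P A).
Proof. exact: fine_ge0 (measure_ge0 _ _). Qed.

End Union.

Unset Implicit Arguments. Set Strict Implicit. Set Printing Implicit Defensive.

Theorem lemma6p2 (d : measure_display) (T : measurableType d) (R : realType)
  (P : probability T R) (n r : nat) (X : 'I_r -> T -> 'rV[R]_n)
  (C p : R) :
  (forall i, random_vector (X i)) ->
  mutually_independent P X ->
  0 < C -> 0 <= p ->
  (forall i, ((1 - p)%:E <= P [set t | (norm2 (X i t) < C)%R])%E) ->
  (((1 - (11 * p) `^ (r%:R / 4))%:E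
     <= P [set t | (norm2 (coord_median (fun i => X i t)) < C * Num.sqrt 3)%R])%E).
Proof.
move=> rv indep C0 p0 hP.
set Med := [set t | _].
case: (posnP r) => [r0|r0].
  by subst r; rewrite mul0r powRr0 subrr; exact: measure_ge0.
case: (leP 1 (11 * p)) => p11.
  apply: le_trans (measure_ge0 _ _).
  rewrite lee_fin subr_le0 -{1}(powRr0 (11 * p)); apply: ler_powR => //.
set M := fun t => \sum_(j < n) (median (fun i => X i t 0 j)) ^+ 2.
have hMed : Med = [set t | M t < 3 * C ^+ 2].
  apply/seteqP; split => t; rewrite /Med /= /norm2 sqrt_lt_equiv //;
  by under eq_bigr do rewrite mxE.
have mM : measurable_fun setT M.
  apply: measurable_sum => j; apply: measurable_realfun.measurable_funX.
  by apply: median_measurable => // i; apply: rv.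
have mMed : measurable Med.
  rewrite hMed; have := mM measurableT _ (measurable_itv `]-oo, 3 * C ^+ 2[).
  rewrite setTI; congr measurable; apply/seteqP; split => t;
  by rewrite /preimage /= in_itv.
set Bd := fun i => ~` [set t | norm2 (X i t) < C].
have hGd : forall i, [set t | norm2 (X i t) < C] =
    [set t | \sum_(j < n) X i t 0 j ^+ 2 < C ^+ 2].
  by move=> i; apply/seteqP; split => t; rewrite /= /norm2 sqrt_lt_equiv1.
have gB : forall i, gen_sigma (X i) (Bd i).
  by move=> i; apply: gen_sigmaC; rewrite hGd; apply: gen_sigma_ball.
have mB : forall i, measurable (Bd i).
  by move=> i; apply: gen_sigma_meas (rv i) (gB i).
have hPB : forall i, fine (P (Bd i)) <= p.
  move=> i; have mG : measurable [set t | norm2 (X i t) < C].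
    by rewrite -(setCK [set t | _]); apply: measurableC; exact: mB.
  have eG := Pfin P mG; have eB := Pfin P (mB i).
  have h1 := hP i; rewrite eG lee_fin in h1.
  have h3 : fine (P (Bd i)) = 1 - fine (P [set t | norm2 (X i t) < C]).
    by apply: EFin_inj; rewrite -eB EFinB -eG /Bd probability_setC.
  rewrite h3; lra.
set IS := fun S : {set 'I_r} =>
  \big[setI/setT]_(i <- index_enum 'I_r | i \in S) Bd i.
have mIS : forall S, measurable (IS S).
  by move=> S; apply: bigsetI_measurable => i _.
have hIS : forall S : {set 'I_r}, fine (P (IS S)) <= p ^+ #|S|.
  move=> S.
  set E := fun i => if i \in S then Bd i else setT.
  have gE : forall i, gen_sigma (X i) (E i).
    by move=> i; rewrite /E; case: ifP => _; [apply: gB|apply: gen_sigmaT].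
  have mE : forall i, measurable (E i).
    by move=> i; rewrite /E; case: ifP.
  have eI : \bigcap_(i in [set: 'I_r]) E i = IS S.
    apply/seteqP; split => t.
      move=> h; apply: in_bigsetI => i iS.
      by have := h i I; rewrite /E iS.
    move=> h i _; rewrite /E; case: ifP => iS //.
    by apply: (bigsetI_in h) iS; rewrite mem_index_enum.
  have := indep E gE; rewrite eI => ->.
  rewrite (eq_bigr (fun i => (fine (P (E i)))%:E)); last first.
    by move=> i _; rewrite -Pfin.
  rewrite prodEFin /=.
  apply: (@le_trans _ _ (\prod_(i < r) (if i \in S then p else 1))).
    apply: ler_prod => i _; rewrite Pfin_ge0 /E; case: ifP => _.
      exact: hPB.
    by rewrite /= (probability_setT P).
  by rewrite -big_mkcond /= prodr_const.
set k := (r %/ 4).+1.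
have rk : (r < 4 * k)%N.
  by have := divn_eq r 4; have := ltn_pmod r (isT : (0 < 4)%N); rewrite /k; lia.
set U := \big[setU/set0]_(S <- index_enum {set 'I_r} | #|S| == k) IS S.
have mU : measurable U by apply: bigsetU_measurable => S _; exact: mIS.
have cover : ~` U `<=` Med.
  move=> t nUt; apply: contrapT => nMt; apply: nUt.
  set bad := [set i | ~~ (\sum_(j < n) X i t 0 j ^+ 2 < C ^+ 2)%R]%SET.
  have hb : (k <= #|bad|)%N.
    rewrite leqNgt; apply/negP => hlt; apply: nMt.
    rewrite hMed /= /M.
    apply: (det_bound (x := fun i j => X i t 0 j)) => //.
    have := divn_eq r 4; have := ltn_pmod r (isT : (0 < 4)%N); rewrite /k in hlt; rewrite -/bad; lia.
  have [S [Sbad cS]] := subset_card_ex hb.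
  apply: (in_bigsetU (x := S)); first by rewrite mem_index_enum.
    by rewrite cS.
  apply: in_bigsetI => i iS.
  have := fintype.subsetP Sbad i iS; rewrite inE => /negP hi.
  by rewrite /Bd hGd.
have hu : (P U <= ('C(r, k)%:R * p ^+ k)%:E)%E.
  apply: le_trans (union_bound P (index_enum _) (fun S : {set 'I_r} => #|S| == k) mIS) _.
  apply: (@le_trans _ _ (\sum_(S <- index_enum {set 'I_r} | #|S| == k) (p ^+ k)%:E)%E).
    apply: lee_sum => S /eqP <-; rewrite (Pfin P (mIS S)) lee_fin; exact: hIS.
  rewrite sumEFin lee_fin.
  rewrite (eq_bigl (fun S => S \in [set S : {set 'I_r} | #|S| == k]%SET)); last first.
    by move=> S; rewrite inE.
  by rewrite sumr_const card_draws card_ord mulr_natl.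
have hu' : fine (P U) <= 'C(r, k)%:R * p ^+ k.
  by rewrite -lee_fin -Pfin.
have hC : 'C(r, k)%:R * p ^+ k <= (11 * p) `^ (r%:R / 4).
  case: (eqVneq p 0) => [->|pn0].
    by rewrite expr0n /= mulr0; exact: powR_ge0.
  have pp : 0 < p by rewrite lt_def pn0.
  apply: (@le_trans _ _ ((11 * p) ^+ k)).
    rewrite exprMn; apply: ler_wpM2r; first exact: exprn_ge0.
    by have := bin_r_le r; rewrite -(ler_nat R) natrX.
  rewrite -powR_mulrn; last by lra.
  apply: ger_powR; first by apply/andP; split; lra.
  have := rk; rewrite -(ltr_nat R) natrM => h; lra.
apply: (@le_trans _ _ (P (~` U))).
  rewrite probability_setC // (Pfin P mU) -EFinB lee_fin; lra.
by apply: le_measure => //; rewrite inE //; exact: measurableC.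
Qed.
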